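(* Let $d\ge2$ and let $\mathbf{p}^\star=(1,p_2^\star,\dots,p_d^\star)$ be a maximizer of the problem $$\max\Big\{\frac{\prod_{i=1}^dp_i}{D_1(\mathbf{p})^d}\;:\;\mathbf{p}\in(0,\infty)^d,\ p_1=1,\ D_1(\mathbf{p})^2\ge D_j(\mathbf{p})^2\text{ for all }j\in\{2,\dots,d\}\Big\}.$$ Then $D(\mathbf{p}^\star)=D_1(\mathbf{p}^\star)=D_2(\mathbf{p}^\star)$ and $$p_2^\star=\sqrt{\tfrac13},\qquad p_j^\star=\sqrt{\tfrac23}\,\frac{1}{j-1}\quad\text{for } j\in\{3,\dots,d\}.$$
   Context: For $k\in\{1,\dots,d\}$ let $w_{k,i}=0$ for $i<k$, $w_{k,k}=k$, $w_{k,i}=i-1$ for $k<i\le d$, $D_k(\mathbf{p})=\sqrt{\sum_{i=1}^dw_{k,i}^2p_i^2}$, and $D(\mathbf{p})=\max_{k\in\{1,\dots,d\}}D_k(\mathbf{p})$. *)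

(* Defs.v *)
(* concrete reals R. Vectors p in R^d are modelled as
   functions nat -> R, of which only the coordinates 1..d are used. *)
From Stdlib Require Import Reals Lra.
Open Scope R_scope.

Fixpoint sum1 (n : nat) (f : nat -> R) : R :=
  match n with O => 0 | S m => sum1 m f + f (S m) end.

Fixpoint prod1 (n : nat) (f : nat -> R) : R :=
  match n with O => 1 | S m => prod1 m f * f (S m) end.

Definition w (k i : nat) : R :=
  if Nat.ltb i k then 0 else if Nat.eqb i k then INR k else INR i - 1.

Definition Dk (d k : nat) (p : nat -> R) : R :=
  sqrt (sum1 d (fun i => (w k i)^2 * (p i)^2)).

Fixpoint maxD (d n : nat) (p : nat -> R) : R :=
  match n with
  | O => 0
  | S O => Dk d 1 p
  | S m => Rmax (maxD d m p) (Dk d (S m) p)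
  end.

Definition D (d : nat) (p : nat -> R) : R := maxD d d p.

Definition objective (d : nat) (p : nat -> R) : R :=
  prod1 d p / (Dk d 1 p) ^ d.

Definition feasible (d : nat) (p : nat -> R) : Prop :=
  (forall i, (1 <= i <= d)%nat -> 0 < p i) /\
  p 1%nat = 1 /\
  (forall j, (2 <= j <= d)%nat -> (Dk d 1 p)^2 >= (Dk d j p)^2).

Definition is_maximizer (d : nat) (p : nat -> R) : Prop :=
  feasible d p /\ forall q, feasible d q -> objective d q <= objective d p.

(* Main.v *)
Require Import Defs.
From Stdlib Require Import Reals Lra Lia Psatz.
Open Scope R_scope.

Lemma sum1_ext n f g : (forall i, (1 <= i <= n)%nat -> f i = g i) -> sum1 n f = sum1 n g.
Proof. induction n; simpl; intros H; auto. rewrite IHn, H; [auto|lia|intros; apply H; lia]. Qed.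
Lemma prod1_ext n f g : (forall i, (1 <= i <= n)%nat -> f i = g i) -> prod1 n f = prod1 n g.
Proof. induction n; simpl; intros H; auto. rewrite IHn, H; [auto|lia|intros; apply H; lia]. Qed.

Lemma sum1_shift n f : sum1 (S n) f = f 1%nat + sum1 n (fun i => f (S i)).
Proof. induction n; simpl in *; [ring|]. rewrite IHn. ring. Qed.
Lemma prod1_shift n f : prod1 (S n) f = f 1%nat * prod1 n (fun i => f (S i)).
Proof. induction n; simpl in *; [ring|]. rewrite IHn. ring. Qed.

Lemma sum1_minus n f g : sum1 n (fun i => f i - g i) = sum1 n f - sum1 n g.
Proof. induction n; simpl; [ring|]. rewrite IHn; ring. Qed.
Lemma sum1_const n c : sum1 n (fun _ => c) = INR n * c.
Proof. induction n; simpl sum1; [simpl; ring|]. rewrite IHn, S_INR; ring. Qed.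
Lemma sum1_scal n c f : sum1 n (fun i => f i * c) = sum1 n f * c.
Proof. induction n; simpl; [ring|]. rewrite IHn; ring. Qed.
Lemma prod1_mult n f g : prod1 n (fun i => f i * g i) = prod1 n f * prod1 n g.
Proof. induction n; simpl; [ring|]. rewrite IHn; ring. Qed.
Lemma prod1_scal n c f : prod1 n (fun i => f i * c) = prod1 n f * c ^ n.
Proof. induction n; simpl; [ring|]. rewrite IHn; ring. Qed.
Lemma prod1_pos n f : (forall i, (1 <= i <= n)%nat -> 0 < f i) -> 0 < prod1 n f.
Proof. induction n; simpl; intros H; [lra|]. apply Rmult_lt_0_compat; [apply IHn|apply H]; intros; try apply H; lia. Qed.
Lemma sum1_nonneg n f : (forall i, (1 <= i <= n)%nat -> 0 <= f i) -> 0 <= sum1 n f.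
Proof. induction n; simpl; intros H; [lra|]. assert (0 <= sum1 n f) by (apply IHn; intros; apply H; lia).
 assert (0 <= f (S n)) by (apply H; lia). lra. Qed.
Lemma sum1_ge_one n f a : (forall i, (1 <= i <= n)%nat -> 0 <= f i) -> (1 <= a <= n)%nat -> f a <= sum1 n f.
Proof. induction n; simpl; intros H Ha; [lia|].
 assert (0 <= sum1 n f) by (apply sum1_nonneg; intros; apply H; lia).
 assert (0 <= f (S n)) by (apply H; lia).
 destruct (Nat.eq_dec a (S n)); [subst; lra|].
 assert (f a <= sum1 n f) by (apply IHn; [intros; apply H|]; lia). lra. Qed.
Lemma sum1_ge_two n f a b : (forall i, (1 <= i <= n)%nat -> i <> b -> 0 <= f i) ->
  (1 <= a < b)%nat -> (b <= n)%nat -> f a + f b <= sum1 n f.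
Proof. induction n; simpl; intros H Ha Hb; [lia|].
 destruct (Nat.eq_dec b (S n)).
 - subst. assert (f a <= sum1 n f) by (apply sum1_ge_one; [intros; apply H|]; lia). lra.
 - assert (0 <= f (S n)) by (apply H; lia).
   assert (f a + f b <= sum1 n f) by (apply IHn; [intros; apply H|..]; lia). lra. Qed.

Lemma le_exp t : t <= exp (t - 1).
Proof. pose proof (exp_ineq1_le (t-1)). lra. Qed.
Lemma lt_exp t : t <> 1 -> t < exp (t - 1).
Proof. intro. pose proof (exp_ineq1 (t-1)). lra. Qed.

Lemma amgm n g : (forall i, (1 <= i <= n)%nat -> 0 < g i) ->
  prod1 n g <= exp (sum1 n (fun i => g i - 1)).
Proof. induction n; simpl; intros H. rewrite exp_0; lra.
 rewrite exp_plus. apply Rmult_le_compat.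
 - left; apply prod1_pos; intros; apply H; lia.
 - left; apply H; lia.
 - apply IHn; intros; apply H; lia.
 - apply le_exp. Qed.

Lemma amgm_strict n g j : (forall i, (1 <= i <= n)%nat -> 0 < g i) -> (1 <= j <= n)%nat -> g j <> 1 ->
  prod1 n g < exp (sum1 n (fun i => g i - 1)).
Proof. induction n; simpl; intros H Hj Hg; [lia|].
 rewrite exp_plus.
 assert (0 < prod1 n g) by (apply prod1_pos; intros; apply H; lia).
 assert (0 < g (S n)) by (apply H; lia).
 destruct (Nat.eq_dec j (S n)).
 - subst. pose proof (amgm n g ltac:(intros; apply H; lia)).
   pose proof (lt_exp _ Hg). pose proof (exp_pos (g (S n) - 1)).
   apply Rle_lt_trans with (exp (sum1 n (fun i => g i - 1)) * g (S n)).
   apply Rmult_le_compat_r; lra. apply Rmult_lt_compat_l; [apply exp_pos|lra].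
 - pose proof (IHn ltac:(intros; apply H; lia) ltac:(lia) Hg).
   pose proof (le_exp (g (S n))).
   apply Rlt_le_trans with (exp (sum1 n (fun i => g i - 1)) * g (S n)).
   apply Rmult_lt_compat_r; lra. apply Rmult_le_compat_l; [left; apply exp_pos|lra]. Qed.

Lemma key m x z : 0 < x <= 1/3 -> (forall i, (1 <= i <= m)%nat -> 0 < z i) ->
  x * prod1 m z * (4 * INR (S (S m)) ^ (S (S m))) <= 3 * (1 + x + sum1 m z) ^ (S (S m))
  /\ (3 * (1 + x + sum1 m z) ^ (S (S m)) <= x * prod1 m z * (4 * INR (S (S m)) ^ (S (S m))) ->
      x = 1/3 /\ forall i, (1 <= i <= m)%nat -> z i = 2/3).
Proof.
  intros Hx Hz.
  set (dd := INR (S (S m))). set (T := 1 + x + sum1 m z). set (d := S (S m)).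
  assert (Hdd : dd = INR m + 2) by (unfold dd; rewrite !S_INR; ring).
  assert (Hm : 0 <= INR m) by apply pos_INR.
  assert (HS : 0 <= sum1 m z) by (apply sum1_nonneg; intros; left; apply Hz; auto).
  assert (HT : 0 < T) by (unfold T; lra).
  set (A := T / dd).
  assert (HA : 0 < A) by (unfold A; apply Rdiv_lt_0_compat; lra).
  set (u := 1 + x). set (r := u / (2 * A)).
  set (g := fun i => z i * / A).
  assert (Hg : forall i, (1 <= i <= m)%nat -> 0 < g i).
  { intros; unfold g; apply Rmult_lt_0_compat; [apply Hz; auto|apply Rinv_0_lt_compat; lra]. }
  assert (Hsum : 2 * (r - 1) + sum1 m (fun i => g i - 1) = 0).
  { rewrite sum1_minus, sum1_const. unfold g. rewrite sum1_scal. unfold r, A.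
    replace (sum1 m z) with (T - u) by (unfold T, u; ring). field_simplify; try lra.
    rewrite Hdd. field. lra. }
  assert (Hprod : prod1 m g = prod1 m z * (/ A) ^ m) by (unfold g; apply prod1_scal).
  assert (HW : r * r * prod1 m g * (4 * T ^ d) = u * u * prod1 m z * dd ^ d).
  { rewrite Hprod. replace T with (A * dd) by (unfold A; field; lra).
    rewrite Rpow_mult_distr. unfold d. simpl pow.
    replace (prod1 m z * (/ A) ^ m) with (prod1 m z / A ^ m).
    2:{ rewrite pow_inv. unfold Rdiv. ring. }
    unfold r. field. split; [|lra]. apply pow_nonzero; lra. }
  assert (Hpz : 0 < prod1 m z) by (apply prod1_pos; auto).
  assert (Hpg : 0 < prod1 m g) by (apply prod1_pos; auto).
  assert (Hr : 0 < r) by (unfold r, u; apply Rdiv_lt_0_compat; lra).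
  assert (HTd : 0 < T ^ d) by (apply pow_lt; lra).
  assert (Hddd : 0 < dd ^ d) by (apply pow_lt; lra).
  assert (Hrr : r * r <= exp (2 * (r - 1))).
  { replace (2 * (r-1)) with ((r-1)+(r-1)) by ring. rewrite exp_plus.
    pose proof (le_exp r). apply Rmult_le_compat; lra. }
  assert (Hle : r * r * prod1 m g <= 1).
  { rewrite <- exp_0, <- Hsum, exp_plus. apply Rmult_le_compat; try nra. apply amgm; auto. }
  assert (Hfin : u * u * prod1 m z * dd ^ d <= 4 * T ^ d).
  { rewrite <- HW. nra. }
  assert (Hq : 16 * x <= 3 * (u * u)) by (unfold u; nra).
  assert (Hu : 0 < u) by (unfold u; lra).
  split.
  -
    apply Rmult_le_reg_r with (u * u); [nra|].
    replace (x * prod1 m z * (4 * dd ^ d) * (u * u)) with (4 * x * (u * u * prod1 m z * dd ^ d)) by ring.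
    apply Rle_trans with (4 * x * (4 * T ^ d)). apply Rmult_le_compat_l; lra. nra.
  - intros Heq.
    assert (Hx3 : x = 1/3).
    { destruct (Req_dec x (1/3)) as [|Hne]; auto. exfalso.
      assert (Hq' : 16 * x < 3 * (u * u)) by (unfold u; nra).
      assert (x * prod1 m z * (4 * dd ^ d) * (u * u) < 3 * T ^ d * (u * u)); [|nra].
      replace (x * prod1 m z * (4 * dd ^ d) * (u * u)) with (4 * x * (u * u * prod1 m z * dd ^ d)) by ring.
      apply Rle_lt_trans with (4 * x * (4 * T ^ d)). apply Rmult_le_compat_l; lra. nra. }
    split; auto.
    intros j Hj. destruct (Req_dec (z j) (2/3)) as [|Hne]; auto. exfalso.
    assert (Hlt : r * r * prod1 m g < 1).
    { destruct (Req_dec r 1) as [Hr1|Hr1].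
      - rewrite Hr1. assert (A = 2/3) by (unfold r, u in Hr1; rewrite Hx3 in Hr1;
          apply (f_equal (fun t => t * (2 * A))) in Hr1; field_simplify in Hr1; lra).
        assert (g j <> 1) by (unfold g; rewrite H; intro Hc; apply Hne;
          apply (f_equal (fun t => t * (2/3))) in Hc; field_simplify in Hc; lra).
        pose proof (amgm_strict m g j Hg Hj H0).
        replace (sum1 m (fun i => g i - 1)) with 0 in H1 by (rewrite Hr1 in Hsum; lra).
        rewrite exp_0 in H1. lra.
      - assert (r * r < exp (2 * (r - 1))).
        { replace (2 * (r-1)) with ((r-1)+(r-1)) by ring. rewrite exp_plus.
          pose proof (lt_exp r Hr1). apply Rmult_le_0_lt_compat; lra. }
        rewrite <- exp_0, <- Hsum, exp_plus.
        pose proof (amgm m g Hg). apply Rlt_le_trans with (exp (2 * (r - 1)) * prod1 m g).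
        apply Rmult_lt_compat_r; lra. apply Rmult_le_compat_l; [left; apply exp_pos|lra]. }
    assert (Hfs : u * u * prod1 m z * dd ^ d < 4 * T ^ d) by (rewrite <- HW; nra).
    assert (x * prod1 m z * (4 * dd ^ d) * (u * u) < 3 * T ^ d * (u * u)); [|nra].
    replace (x * prod1 m z * (4 * dd ^ d) * (u * u)) with (4 * x * (u * u * prod1 m z * dd ^ d)) by ring.
    apply Rlt_le_trans with (4 * x * (4 * T ^ d)). apply Rmult_lt_compat_l; lra. nra.
Qed.

Lemma w_lt k i : (i < k)%nat -> w k i = 0.
Proof. intro; unfold w. destruct (Nat.ltb_spec i k); [auto|lia]. Qed.
Lemma w_eq k : w k k = INR k.
Proof. unfold w. destruct (Nat.ltb_spec k k); [lia|]. rewrite Nat.eqb_refl; auto. Qed.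
Lemma w_gt k i : (k < i)%nat -> w k i = INR i - 1.
Proof. intro; unfold w. destruct (Nat.ltb_spec i k); [lia|]. destruct (Nat.eqb_spec i k); [lia|auto]. Qed.

Lemma Dk_sq d k p : Dk d k p ^ 2 = sum1 d (fun i => w k i ^ 2 * p i ^ 2).
Proof. unfold Dk. apply pow2_sqrt. apply sum1_nonneg. intros. nra. Qed.

Lemma maxD_eq d p n : (1 <= n <= d)%nat -> (forall k, (2 <= k <= d)%nat -> Dk d k p <= Dk d 1 p) ->
  maxD d n p = Dk d 1 p.
Proof. induction n; intros Hn H; [lia|]. destruct n; [reflexivity|].
  change (Rmax (maxD d (S n) p) (Dk d (S (S n)) p) = Dk d 1 p).
  rewrite IHn by (auto; lia). apply Rmax_left. apply H. lia. Qed.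

Lemma S1_expand m p : p 1%nat = 1 ->
  sum1 (S (S m)) (fun i => w 1 i ^ 2 * p i ^ 2) =
  1 + p 2%nat ^ 2 + sum1 m (fun i => ((INR (S (S i)) - 1) * p (S (S i))) ^ 2).
Proof. intros H1. rewrite !sum1_shift. rewrite (w_eq 1), (w_gt 1 2) by lia. rewrite H1.
  rewrite (sum1_ext m _ (fun i => ((INR (S (S i)) - 1) * p (S (S i))) ^ 2)).
  simpl INR. ring. intros. rewrite w_gt by lia. ring. Qed.

Lemma S2_expand m p :
  sum1 (S (S m)) (fun i => w 2 i ^ 2 * p i ^ 2) =
  4 * p 2%nat ^ 2 + sum1 m (fun i => ((INR (S (S i)) - 1) * p (S (S i))) ^ 2).
Proof. rewrite !sum1_shift. rewrite (w_lt 2 1), (w_eq 2) by lia.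
  rewrite (sum1_ext m _ (fun i => ((INR (S (S i)) - 1) * p (S (S i))) ^ 2)).
  simpl INR. ring. intros. rewrite w_gt by lia. ring. Qed.

Lemma obj_expand m p : p 1%nat = 1 ->
  objective (S (S m)) p = p 2%nat * prod1 m (fun i => p (S (S i))) / Dk (S (S m)) 1 p ^ (S (S m)).
Proof. intros H1. unfold objective. rewrite !prod1_shift, H1. f_equal; ring. Qed.

Definition zf (p : nat -> R) := fun i => ((INR (S (S i)) - 1) * p (S (S i))) ^ 2.
Definition Kc m := prod1 m (fun i => (INR (S (S i)) - 1) ^ 2).

Lemma analyze m p : feasible (S (S m)) p ->
  0 < p 2%nat ^ 2 <= 1/3 /\ (forall i, (1 <= i <= m)%nat -> 0 < zf p i) /\
  Dk (S (S m)) 1 p ^ 2 = 1 + p 2%nat ^ 2 + sum1 m (zf p) /\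
  Dk (S (S m)) 2 p ^ 2 = 4 * p 2%nat ^ 2 + sum1 m (zf p) /\
  Kc m * objective (S (S m)) p ^ 2 * (1 + p 2%nat ^ 2 + sum1 m (zf p)) ^ (S (S m))
    = p 2%nat ^ 2 * prod1 m (zf p) /\ 0 < objective (S (S m)) p.
Proof.
  intros [Hpos [H1 Hc]].
  assert (Hp2 : 0 < p 2%nat) by (apply Hpos; lia).
  assert (HD1 := Dk_sq (S (S m)) 1 p). rewrite S1_expand in HD1 by auto. fold (zf p) in HD1.
  assert (HD2 := Dk_sq (S (S m)) 2 p). rewrite S2_expand in HD2. fold (zf p) in HD2.
  assert (Hz : forall i, (1 <= i <= m)%nat -> 0 < zf p i).
  { intros i Hi. unfold zf. assert (0 < p (S (S i))) by (apply Hpos; lia).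
    assert (1 < INR (S (S i))) by (rewrite !S_INR; pose proof (pos_INR i); lra). apply pow_lt. nra. }
  assert (HS : 0 <= sum1 m (zf p)) by (apply sum1_nonneg; intros; left; auto).
  split; [|split; [auto|split; [auto|split; [auto|]]]].
  - pose proof (Hc 2%nat ltac:(lia)). nra.
  - set (T := 1 + p 2%nat ^ 2 + sum1 m (zf p)) in *.
    assert (HT : 0 < T) by (unfold T; nra).
    assert (HDp : 0 < Dk (S (S m)) 1 p) by (unfold Dk; apply sqrt_lt_R0;
      rewrite <- (Dk_sq (S (S m)) 1 p), HD1; auto).
    set (Q := prod1 m (fun i => p (S (S i)))).
    assert (HQ : 0 < Q) by (apply prod1_pos; intros; apply Hpos; lia).
    assert (Hpz : prod1 m (zf p) = Kc m * (Q * Q)).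
    { unfold Q, Kc. rewrite <- prod1_mult, <- prod1_mult. apply prod1_ext. intros; unfold zf; ring. }
    rewrite obj_expand by auto. fold Q.
    assert (HDd : 0 < Dk (S (S m)) 1 p ^ S (S m)) by (apply pow_lt; auto).
    split.
    + rewrite Hpz. rewrite <- HD1.
      replace ((Dk (S (S m)) 1 p ^ 2) ^ S (S m)) with ((Dk (S (S m)) 1 p ^ S (S m)) ^ 2)
        by (rewrite <- !pow_mult; f_equal; lia).
      field. lra.
    + apply Rdiv_lt_0_compat; auto. apply Rmult_lt_0_compat; auto.
Qed.

Definition qs (i : nat) : R :=
  match i with 1%nat => 1 | 2%nat => sqrt (1/3) | _ => sqrt (2/3) / (INR i - 1) end.

Lemma qs_big i : (3 <= i)%nat -> qs i = sqrt (2/3) / (INR i - 1).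
Proof. intro. destruct i as [|[|[|i]]]; try lia; reflexivity. Qed.

Lemma qs_feasible d : (2 <= d)%nat -> feasible d qs.
Proof.
  intros Hd. assert (Hs1 : 0 < sqrt (1/3)) by (apply sqrt_lt_R0; lra).
  assert (Hs2 : 0 < sqrt (2/3)) by (apply sqrt_lt_R0; lra).
  assert (Hsq1 : sqrt (1/3) ^ 2 = 1/3) by (apply pow2_sqrt; lra).
  assert (Hsq2 : sqrt (2/3) ^ 2 = 2/3) by (apply pow2_sqrt; lra).
  split; [|split; [reflexivity|]].
  - intros i Hi. destruct (Compare_dec.le_lt_dec 3 i).
    + rewrite qs_big by auto. apply Rdiv_lt_0_compat; auto.
      apply le_INR in l. simpl in l. lra.
    + destruct i as [|[|[|i]]]; try lia; simpl; lra.
  - intros j Hj. rewrite !Dk_sq. apply Rle_ge.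
    assert (0 <= sum1 d (fun i => w 1 i ^ 2 * qs i ^ 2 - w j i ^ 2 * qs i ^ 2)); [|rewrite sum1_minus in H; lra].
    eapply Rle_trans; [|apply (sum1_ge_two d _ 1 j)].
    + cbv beta. rewrite (w_eq 1), (w_lt j 1), (w_gt 1 j), w_eq by lia. simpl qs. simpl INR.
      destruct (Compare_dec.le_lt_dec 3 j).
      * rewrite qs_big by auto. assert (HJ : 3 <= INR j) by (apply le_INR in l; simpl in l; lra). set (J := INR j) in *.
        set (t := sqrt (2/3) / (J - 1)).
        assert (Hv : t * (J - 1) = sqrt (2/3)) by (unfold t; field; lra).
        assert (Ht : 0 < t) by (unfold t; apply Rdiv_lt_0_compat; lra).
        assert (J * t <= 3/2 * sqrt (2/3)) by nra.
        assert ((J*t)^2 <= (3/2 * sqrt (2/3))^2) by (apply pow_incr; nra).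
        assert ((t * (J-1))^2 = 2/3) by (rewrite Hv; auto).
        nra.
      * assert (j = 2%nat) by lia. subst. simpl. nra.
    + intros i Hi Hne. destruct (Compare_dec.lt_dec i j).
      * rewrite (w_lt j i) by auto. nra.
      * rewrite (w_gt j i), (w_gt 1 i) by lia. lra.
    + lia.
    + lia.
Qed.

Lemma prod1_const n c : prod1 n (fun _ => c) = c ^ n.
Proof. induction n; simpl; [ring|]. rewrite IHn; ring. Qed.

Theorem lemma7 (d : nat) (pstar : nat -> R) :
  (2 <= d)%nat ->
  is_maximizer d pstar ->
  D d pstar = Dk d 1 pstar /\ Dk d 1 pstar = Dk d 2 pstar /\
  pstar 2%nat = sqrt (1/3) /\
  (forall j, (3 <= j <= d)%nat -> pstar j = sqrt (2/3) * (1 / (INR j - 1))).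
Proof.
  intros Hd [Hfeas Hmax].
  pose proof (qs_feasible d Hd) as Hqf.
  pose proof (Hmax qs Hqf) as Hle.
  assert (HDle : forall k, (2 <= k <= d)%nat -> Dk d k pstar <= Dk d 1 pstar).
  { intros k Hk. destruct Hfeas as [_ [_ Hc]]. pose proof (Hc k Hk).
    pose proof (sqrt_pos (sum1 d (fun i => w k i ^ 2 * pstar i ^ 2))).
    pose proof (sqrt_pos (sum1 d (fun i => w 1 i ^ 2 * pstar i ^ 2))). unfold Dk in *. nra. }
  destruct d as [|[|m]]; try lia.
  pose proof (analyze m pstar Hfeas) as [Hx [Hz [HD1 [HD2 [HK Hob]]]]].
  pose proof (analyze m qs Hqf) as [_ [_ [_ [_ [HKq Hobq]]]]].
  assert (Hs2 : 0 < sqrt (2/3)) by (apply sqrt_lt_R0; lra).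
  assert (Hsq1 : sqrt (1/3) ^ 2 = 1/3) by (apply pow2_sqrt; lra).
  assert (Hsq2 : sqrt (2/3) ^ 2 = 2/3) by (apply pow2_sqrt; lra).
  assert (Hzq : forall i, (1 <= i <= m)%nat -> zf qs i = 2/3).
  { intros i Hi. unfold zf. rewrite qs_big by lia.
    assert (1 < INR (S (S i))) by (rewrite !S_INR; pose proof (pos_INR i); lra).
    replace ((INR (S (S i)) - 1) * (sqrt (2 / 3) / (INR (S (S i)) - 1))) with (sqrt (2/3)) by (field; lra).
    auto. }
  rewrite (sum1_ext m _ (fun _ => 2/3) Hzq), sum1_const in HKq.
  rewrite (prod1_ext m _ (fun _ => 2/3) Hzq), prod1_const in HKq.
  replace (qs 2%nat) with (sqrt (1/3)) in HKq by reflexivity. rewrite Hsq1 in HKq.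
  set (dd := INR (S (S m))) in *.
  assert (Hddp : 0 < dd) by (unfold dd; apply lt_0_INR; lia).
  assert (Eq : 1/3 * (2/3) ^ m * (4 * dd ^ S (S m)) = 3 * (1 + 1/3 + INR m * (2/3)) ^ S (S m)).
  { replace (1 + 1/3 + INR m * (2/3)) with (2/3 * dd) by (unfold dd; rewrite !S_INR; lra).
    rewrite Rpow_mult_distr. simpl pow. field. }
  assert (HKc : 0 < Kc m).
  { apply prod1_pos. intros. assert (1 < INR (S (S i))) by (rewrite !S_INR; pose proof (pos_INR i); lra).
    apply pow_lt; lra. }
  set (T := 1 + pstar 2%nat ^ 2 + sum1 m (zf pstar)) in *.
  set (Tq := 1 + 1/3 + INR m * (2/3)) in *.
  assert (HTq : 0 < Tq ^ S (S m)) by (apply pow_lt; unfold Tq; pose proof (pos_INR m); lra).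
  assert (HT : 0 < T ^ S (S m)) by (apply pow_lt; unfold T; pose proof (sum1_nonneg m (zf pstar) ltac:(intros; left; auto)); nra).
  set (op := objective (S (S m)) pstar) in *. set (oq := objective (S (S m)) qs) in *.
  assert (Hq3 : Kc m * oq ^ 2 * (4 * dd ^ S (S m)) = 3).
  { apply Rmult_eq_reg_r with (Tq ^ S (S m)); [|lra].
    replace (Kc m * oq ^ 2 * (4 * dd ^ S (S m)) * Tq ^ S (S m)) with (Kc m * oq ^ 2 * Tq ^ S (S m) * (4 * dd ^ S (S m))) by ring.
    rewrite HKq. lra. }
  assert (Hoo : oq ^ 2 <= op ^ 2) by (apply pow_incr; lra).
  assert (Hddd : 0 < dd ^ S (S m)) by (apply pow_lt; lra).
  assert (Hge : 3 * T ^ S (S m) <= pstar 2%nat ^ 2 * prod1 m (zf pstar) * (4 * dd ^ S (S m))).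
  { rewrite <- HK, <- Hq3.
    replace (Kc m * op ^ 2 * T ^ S (S m) * (4 * dd ^ S (S m))) with ((Kc m * (4 * dd ^ S (S m)) * T ^ S (S m)) * op ^ 2) by ring.
    replace (Kc m * oq ^ 2 * (4 * dd ^ S (S m)) * T ^ S (S m)) with ((Kc m * (4 * dd ^ S (S m)) * T ^ S (S m)) * oq ^ 2) by ring.
    apply Rmult_le_compat_l; [|auto]. apply Rmult_le_pos; [|lra]. apply Rmult_le_pos; lra. }
  destruct (key m _ _ Hx Hz) as [_ Hkey]. fold T in Hkey. fold dd in Hkey.
  destruct (Hkey Hge) as [Hx3 Hzp].
  assert (Hp2 : 0 < pstar 2%nat) by (destruct Hfeas as [Hpos _]; apply Hpos; lia).
  split; [|split; [|split]].
  - unfold D. apply maxD_eq; [lia|auto].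
  - rewrite <- (sqrt_pow2 (Dk _ 1 _)), <- (sqrt_pow2 (Dk _ 2 _)) by apply sqrt_pos.
    rewrite HD1, HD2. f_equal. unfold T. lra.
  - rewrite <- Hx3. rewrite sqrt_pow2; lra.
  - intros j Hj. destruct j as [|[|i]]; try lia.
    pose proof (Hzp i ltac:(lia)) as Hzi. unfold zf in Hzi.
    assert (1 < INR (S (S i))) by (rewrite !S_INR; pose proof (pos_INR i); lra).
    assert (0 < pstar (S (S i))) by (destruct Hfeas as [Hpos _]; apply Hpos; lia).
    assert (Hsi : (INR (S (S i)) - 1) * pstar (S (S i)) = sqrt (2/3)).
    { rewrite <- Hzi. rewrite sqrt_pow2; nra. }
    rewrite <- Hsi. field. lra.
Qed.
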